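(* Let $n,m>3$ be integers and let $\psi$ be an automorphism of $\mathcal{CSR}(m,n)$, and suppose $\psi_1,\dots,\psi_m$ are permutations of $\mathbb{Z}_n$ and $\sigma$ is a permutation of $[m]$ such that $\psi\big(\sum_i x_ie_i\big)=\sum_i\psi_i(x_i)e_{\sigma(i)}$ for every vertex. Then there are $c,d\in\mathbb{Z}_n$ with $c$ coprime to $n$ such that $\psi_1(x)=cx+d$ for all $x\in\mathbb{Z}_n$.
   Context: For positive integers $m,n$, the cyclic simplicial rook graph $\mathcal{CSR}(m,n)$ is the graph whose vertices are the vectors $(a_1,\dots,a_m)\in\mathbb{Z}_n^m$ with $a_1+\cdots+a_m\equiv 0 \pmod n$, two vertices being adjacent if and only if their vectors differ in exactly two coordinates. $[m]=\{1,\dots,m\}$ and $e_i\in\mathbb{Z}_n^m$ is the vector with $1$ in coordinate $i$ and $0$ elsewhere. *)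

(* Defs.v *)
From HB Require Import structures.
From mathcomp Require Import all_boot all_order all_algebra all_fingroup.
Set Implicit Arguments. Unset Strict Implicit. Unset Printing Implicit Defensive.
Import GRing.Theory.
Local Open Scope ring_scope.

(* Vertices of CSR(m,n): vectors a in Z_n^m (functions 'I_m -> 'Z_n) with
   a_1 + ... + a_m = 0 in Z_n.  ('Z_n is Z/nZ when n >= 2.) *)
Definition csr_vertex (m n : nat) : predArgType :=
  {a : {ffun 'I_m -> 'Z_n} | \sum_(i < m) a i == 0}.

Definition csr_adj (m n : nat) (x y : csr_vertex m n) : bool :=
  #|[set i : 'I_m | val x i != val y i]| == 2%N.

Definition csr_automorphism (m n : nat) (psi : csr_vertex m n -> csr_vertex m n) : Prop :=
  bijective psi /\ forall x y, csr_adj (psi x) (psi y) = csr_adj x y.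

(* Main.v *)
Require Import Defs.
From HB Require Import structures.
From mathcomp Require Import all_boot all_order all_algebra all_fingroup.
From mathcomp Require Import ring.
Import GRing.Theory.
Local Open Scope ring_scope.

Theorem lemma8 (m n : nat) (hm : (3 < m)%N) (hn : (3 < n)%N)
  (psi : csr_vertex m n -> csr_vertex m n) (Hpsi : csr_automorphism psi)
  (psis : 'I_m -> {perm 'Z_n}) (sigma : {perm 'I_m})
  (Hform : forall (x : csr_vertex m n) (i : 'I_m),
      val (psi x) (sigma i) = psis i (val x i))
  (i1 : 'I_m) (Hi1 : nat_of_ord i1 = 0%N) :
  exists c d : 'Z_n, coprime c n /\ forall x : 'Z_n, psis i1 x = c * x + d.
Proof.
have key : forall a : {ffun 'I_m -> 'Z_n}, \sum_(i < m) a i = 0 ->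
    \sum_(i < m) psis i (a i) = 0.
  move=> a ha.
  have ha' : \sum_(i < m) a i == 0 by apply/eqP.
  pose x : csr_vertex m n := exist _ a ha'.
  have := valP (psi x); move/eqP.
  rewrite (reindex_inj (@perm_inj _ sigma)) /=.
  under eq_bigr => i _ do rewrite Hform.
  by [].
have lt1 : (1 < m)%N by apply: leq_trans hm.
have lt2 : (2 < m)%N by apply: leq_trans hm.
pose j : 'I_m := Ordinal lt1.
pose k : 'I_m := Ordinal lt2.
have ji : (j != i1) by rewrite -val_eqE /= Hi1.
have ki : (k != i1) by rewrite -val_eqE /= Hi1.
have kj : (k != j) by rewrite -val_eqE.
pose C := \sum_(i < m | (i != i1) && (i != j) && (i != k)) psis i 0.
have P : forall a b c : 'Z_n, a + b + c = 0 ->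
    psis i1 a + psis j b + psis k c + C = 0.
  move=> a b c habc.
  pose v := [ffun i : 'I_m => if i == i1 then a else if i == j then b
                               else if i == k then c else 0].
  have vs : \sum_(i < m) v i = 0.
    rewrite (bigD1 i1) // (bigD1 j) //= (bigD1 k) /=; last by rewrite ki ?kj.
    rewrite big1; last first.
      by move=> i /andP [/andP [hi1 hj] hk]; rewrite ffunE (negbTE hi1) (negbTE hj) (negbTE hk).
    by rewrite !ffunE eqxx (negbTE ji) eqxx (negbTE ki) (negbTE kj) eqxx addr0 !addrA.
  have := key v vs.
  rewrite (bigD1 i1) // (bigD1 j) //= (bigD1 k) /=; last by rewrite ki ?kj.
  rewrite !ffunE eqxx (negbTE ji) eqxx (negbTE ki) (negbTE kj) eqxx !addrA.
  move=> <-; congr (_ + _).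
  apply: eq_bigr => i /andP [/andP [hi1 hj] hk].
  by rewrite ffunE (negbTE hi1) (negbTE hj) (negbTE hk).
set f := psis i1.
have E1 : forall a b, f a + psis j b = f (a + b) + psis j 0.
  move=> a b.
  have h1 := P a b (- (a + b)) (subrr _).
  have h2 := P (a + b) 0 (- (a + b)) ltac:(by rewrite addr0 subrr).
  by apply: (addIr (psis k (- (a + b)) + C)); rewrite !addrA h1 h2.
have E2 : forall b, psis j b = f b + psis j 0 - f 0.
  by move=> b; apply: (addrI (f 0)); rewrite (E1 0 b) add0r [f 0 + _]addrC subrK.
pose g x := f x - f 0.
have gD : forall a b, g (a + b) = g a + g b.
  move=> a b; rewrite /g.
  have := E1 a b; rewrite E2 => h.
  have h' : f (a + b) = f a + f b - f 0.
    by apply: (addIr (psis j 0)); rewrite -h; ring.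
  by rewrite h'; ring.
have g0 : g 0 = 0 by rewrite /g subrr.
have gn : forall k, g (1 *+ k) = g 1 *+ k.
  elim=> [|l IH]; first by rewrite !mulr0n.
  by rewrite !mulrS gD IH.
have gx : forall x : 'Z_n, g x = g 1 * x.
  move=> x; rewrite -{1}(natr_Zp x) gn.
  by rewrite -mulr_natr natr_Zp.
exists (g 1), (f 0); split; last first.
  by move=> x; rewrite -gx /g subrK.
have [y hy] : exists y, f y = f 0 + 1.
  exists ((psis i1)^-1 (f 0 + 1))%g; by rewrite /f permKV.
have u : g 1 \is a GRing.unit.
  apply/unitrPr; exists y; rewrite -gx /g hy.
  by rewrite addrC addKr.
rewrite coprime_sym -(@unitZpE n); last by apply: (ltn_trans _ hn).
by rewrite natr_Zp.
Qed.
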